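(* Let $n\ge2$, $m\ge2$, and let $M$ be a nonderogatory $m\times m$ matrix with minimal polynomial $\mathbf p(X)=X^m$. Let $k_+,k_-$ be integers with $1\le k_+,k_-\le m-1$ and $k_++k_-=m$. Then the algebra $\mathfrak B(X^{k_+},X^{k_-},\mathbf 1)$ is not a pseudocirculant algebra, i.e. there are no $A,B\in\mathcal P(M)$ with $\ker A\cap\ker B=\{0\}$ such that $\mathfrak B(X^{k_+},X^{k_-},\mathbf 1)=\mathcal F^{\mathcal P(M)}_{A,B}$.
   Context: $\mathcal P(M)$ is the algebra of polynomials in $M$. $\mathfrak B(\mathbf p_+,\mathbf p_-,\boldsymbol\chi)$ (for $\mathbf p_+\mathbf p_-\mid\mathbf p$, $\boldsymbol\chi$ coprime to $\mathbf p$, $\mathbf q=\mathbf p/(\mathbf p_+\mathbf p_-)$) is the set of $n\times n$ block Toeplitz matrices $A=(A_{i-j})_{i,j=0}^{n-1}$ with all $A_i\in\mathcal P(M)$ such that for each $i=1,\dots,n-1$ there are polynomials $\mathbf a_i,\mathbf a_{i-n}$ with $A_i=\mathbf p_+(M)\mathbf a_i(M)$, $A_{i-n}=\mathbf p_-(M)\mathbf a_{i-n}(M)$ and $\mathbf q\mid\mathbf a_i-\boldsymbol\chi\mathbf a_{i-n}$; here $\mathbf 1$ is the constant polynomial $1$. For $A,B\in\mathcal P(M)$, $\mathcal F^{\mathcal P(M)}_{A,B}$ is the set of $n\times n$ block Toeplitz matrices $(T_{p-q})_{p,q=0}^{n-1}$ with all $T_j\in\mathcal P(M)$ and $AT_j=BT_{j-n}$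 for $j=1,\dots,n-1$; it is called a pseudocirculant algebra when $\ker A\cap\ker B=\{0\}$. *)

(* Defs.v *)
From HB Require Import structures.
From mathcomp Require Import all_boot all_order all_algebra.
Set Implicit Arguments. Unset Strict Implicit. Unset Printing Implicit Defensive.
Import GRing.Theory.
Local Open Scope ring_scope.

(* Throughout, the matrix size is m = m'.+1 (needed by mxminpoly / horner_mx). *)

Definition inPM (F : fieldType) (m' : nat) (M : 'M[F]_m'.+1) (X : 'M[F]_m'.+1) : Prop :=
  exists p : {poly F}, X = horner_mx M p.

(* An n x n block Toeplitz matrix (A_{i-j})_{i,j=0}^{n-1} is represented by its
   symbol  t : int -> 'M_m ; only the values t j for -(n-1) <= j <= n-1 matter,
   and both predicates below only inspect those values. *)

Definition blocks_in_PM (F : fieldType) (m' : nat) (M : 'M[F]_m'.+1) (n : nat)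
    (t : int -> 'M[F]_m'.+1) : Prop :=
  forall j : int, - ((n%:Z) - 1) <= j <= (n%:Z) - 1 -> inPM M (t j).

(* the set  B(p_+, p_-, chi) ; here p is the minimal polynomial of M,
   q = p / (p_+ p_-). *)
Definition frakB (F : fieldType) (m' : nat) (M : 'M[F]_m'.+1) (n : nat)
    (p pp pm chi : {poly F}) (t : int -> 'M[F]_m'.+1) : Prop :=
  blocks_in_PM M n t /\
  forall i : nat, (1 <= i <= n.-1)%N ->
    exists a_i a_in : {poly F},
      t (i%:Z) = horner_mx M pp * horner_mx M a_i /\
      t (i%:Z - n%:Z) = horner_mx M pm * horner_mx M a_in /\
      (p %/ (pp * pm)) %| (a_i - chi * a_in).

Definition calF (F : fieldType) (m' : nat) (M : 'M[F]_m'.+1) (n : nat)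
    (A B : 'M[F]_m'.+1) (t : int -> 'M[F]_m'.+1) : Prop :=
  blocks_in_PM M n t /\
  forall j : nat, (1 <= j <= n.-1)%N -> A * t (j%:Z) = B * t (j%:Z - n%:Z).

Definition trivial_common_kernel (F : fieldType) (m' : nat) (A B : 'M[F]_m'.+1) : Prop :=
  forall v : 'cV[F]_m'.+1, A *m v = 0 -> B *m v = 0 -> v = 0.

Definition nonderogatory (F : fieldType) (m' : nat) (M : 'M[F]_m'.+1) : Prop :=
  mxminpoly M = char_poly M.

(* Main.v *)
Require Import Defs.
From HB Require Import structures.
From mathcomp Require Import all_boot all_order all_algebra.
From mathcomp Require Import zify.
Import GRing.Theory.
Local Open Scope ring_scope.

Lemma polyXn_eq0_neq (F : fieldType) k : ('X^k : {poly F}) != 0.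
Proof. by rewrite monic_neq0 // monicXn. Qed.

Lemma hXn (F : fieldType) (m' : nat) (M : 'M[F]_m'.+1) k :
  horner_mx M 'X^k = M ^+ k.
Proof. by rewrite rmorphXn /= horner_mx_X. Qed.

Theorem mainTheorem15 (F : fieldType) (n m' : nat) (M : 'M[F]_m'.+1)
    (kp km : nat) :
  (2 <= n)%N -> (2 <= m'.+1)%N ->
  nonderogatory M -> mxminpoly M = 'X^(m'.+1) ->
  (1 <= kp <= m')%N -> (1 <= km <= m')%N -> (kp + km = m'.+1)%N ->
  ~ (exists A B : 'M[F]_m'.+1,
        inPM M A /\ inPM M B /\ trivial_common_kernel A B /\
        (forall t : int -> 'M[F]_m'.+1,
           frakB M n 'X^(m'.+1) 'X^kp 'X^km 1 t <-> calF M n A B t)).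
Proof.
move=> n2 m2 _ minM /andP[kp1 _] /andP[km1 _] Hk [A [B [_ [_ [HAB Heq]]]]].
have hq : 'X^(m'.+1) %/ ('X^kp * 'X^km) = 1 :> {poly F}.
  by rewrite -exprD Hk divpp // monic_neq0 // monicXn.
have inP0 : inPM M 0 by exists 0; rewrite rmorph0.
pose t1 : int -> 'M[F]_m'.+1 := fun j => if j == 1 then M ^+ kp else 0.
pose t2 : int -> 'M[F]_m'.+1 := fun j => if j == 1 - n%:Z then M ^+ km else 0.
have n1 : (1 <= n.-1)%N by move: n2; case: (n) => [|[|k]].
have F1 : frakB M n 'X^(m'.+1) 'X^kp 'X^km 1 t1.
  split.
    move=> j _; rewrite /t1; case: ifP => _ //; by exists 'X^kp; rewrite hXn.
  move=> i /andP[i1 iN].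
  have ne : (i%:Z - n%:Z == 1) = false.
    by apply/negbTE/eqP => H; lia.
  case: (eqVneq i 1%N) => [->|ni1].
    exists 1, 0; rewrite /t1 eqxx (_ : ((1%N)%:Z - n%:Z == 1) = false); last by apply/negbTE/eqP; lia.
    by rewrite rmorph1 rmorph0 !hXn !mulr1 !mulr0 hq dvd1p; split.
  exists 0, 0; rewrite /t1 ne (_ : (i%:Z == 1) = false); last by apply/negbTE/eqP; move/eqP: ni1; lia.
  by rewrite rmorph0 !mulr0 hq dvd1p; split.
have F2 : frakB M n 'X^(m'.+1) 'X^kp 'X^km 1 t2.
  split.
    move=> j _; rewrite /t2; case: ifP => _ //; by exists 'X^km; rewrite hXn.
  move=> i /andP[i1 iN].
  have ne : (i%:Z == 1 - n%:Z) = false.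
    by apply/negbTE/eqP => H; lia.
  case: (eqVneq i 1%N) => [->|ni1].
    exists 0, 1; rewrite /t2 eqxx (_ : ((1%N)%:Z == 1 - n%:Z) = false) //; last by apply/negbTE/eqP; lia.
    by rewrite rmorph1 rmorph0 !hXn !mulr1 !mulr0 hq dvd1p; split.
  exists 0, 0; rewrite /t2 ne (_ : (i%:Z - n%:Z == 1 - n%:Z) = false); last first.
    by apply/negbTE/eqP; move/eqP: ni1; lia.
  by rewrite rmorph0 !mulr0 hq dvd1p; split.
have AM : A * M ^+ kp = 0.
  have [_ h] := (Heq t1).1 F1; have := h 1%N.
  rewrite leqnn n1 => /(_ isT); rewrite /t1 eqxx.
  suff -> : ((1%N)%:Z - n%:Z == 1) = false by rewrite mulr0.
  by apply/negbTE/eqP; lia.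
have BM : B * M ^+ km = 0.
  have [_ h] := (Heq t2).1 F2; have := h 1%N.
  rewrite leqnn n1 => /(_ isT); rewrite /t2 eqxx.
  suff -> : ((1%N)%:Z == 1 - n%:Z) = false by rewrite mulr0 => ->.
  by apply/negbTE/eqP; lia.
have Mnz : M ^+ m' != 0.
  apply/negP => /eqP H.
  have H' : horner_mx M 'X^m' = 0 by rewrite hXn.
  have := dvdp_leq (@polyXn_eq0_neq F m') (mxminpoly_min H').
  by rewrite minM !size_polyXn ltnn.
have : [exists i, exists j, (M ^+ m') i j != 0].
  case: (boolP [exists i, exists j, (M ^+ m') i j != 0]) => // H; exfalso.
  move: H; rewrite negb_exists => /forallP H.
  move/negP: Mnz; apply; apply/eqP/matrixP => i j.
  move: (H i); rewrite negb_exists => /forallP /(_ j) /negPn /eqP ->.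
  by rewrite mxE.
case/existsP => i /existsP [j Hij].
pose v := M ^+ m' *m delta_mx j (0 : 'I_1).
have : v = 0.
  have e1 : M ^+ m' = M ^+ kp *m M ^+ km.-1.
    by rewrite -[_ *m _]/(M ^+ kp * M ^+ km.-1) -exprD; congr (_ ^+ _); lia.
  have e2 : M ^+ m' = M ^+ km *m M ^+ kp.-1.
    by rewrite -[_ *m _]/(M ^+ km * M ^+ kp.-1) -exprD; congr (_ ^+ _); lia.
  have AM' : A *m M ^+ kp = 0 := AM.
  have BM' : B *m M ^+ km = 0 := BM.
  apply: HAB.
    by rewrite /v e1 !mulmxA AM' !mul0mx.
  by rewrite /v e2 !mulmxA BM' !mul0mx.
move/matrixP => /(_ i 0); rewrite /v -colE mxE [RHS]mxE.
by move/eqP: Hij.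
Qed.
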